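(* Let $q\ge3$ be a prime power and let $\ell_0,\ell_1,\dots$ be integers with $0\le\ell_i\le q-2$. Let $P_0=[0,\ell_0]\subseteq\mathbb{R}$ and $P_i=P_{i-1}\oplus[0,\ell_i]\subseteq\mathbb{R}^{i+1}$ for $i\ge1$. Then $R(P_i)\to0$ as $i\to\infty$.
   Context: The direct sum of integral convex polytopes $P\subseteq\mathbb{R}^n$ and $Q\subseteq\mathbb{R}^m$ both containing the origin is $P\oplus Q=\mathrm{conv}\big(\{(p,\mathbf{0}):p\in P\}\cup\{(\mathbf{0},y):y\in Q\}\big)\subseteq\mathbb{R}^{n+m}$. For an integral convex polytope $P\subseteq[0,q-2]^n$, $R(P)=|P\cap\mathbb{Z}^n|/(q-1)^n$. *)

(* Defs.v *)
From HB Require Import structures.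
From mathcomp Require Import all_boot all_order all_algebra.
From mathcomp Require Import all_classical all_reals all_analysis.
Set Implicit Arguments. Unset Strict Implicit. Unset Printing Implicit Defensive.
Import Order.TTheory GRing.Theory Num.Theory.
Local Open Scope classical_set_scope.
Local Open Scope ring_scope.

Section Defs.
Variable R : realType.

Definition point (n : nat) := 'I_n -> R.

Definition conv (n : nat) (S : set (point n)) : set (point n) :=
  [set x | exists (m : nat) (w : 'I_m -> R) (p : 'I_m -> point n),
      (forall k, 0 <= w k) /\ \sum_(k < m) w k = 1 /\
      (forall k, S (p k)) /\ (forall j, x j = \sum_(k < m) w k * p k j)].

Definition embl (n m : nat) (p : point n) : point (n + m) :=
  fun j => match fintype.split j with inl a => p a | inr _ => 0 end.
Definition embr (n m : nat) (y : point m) : point (n + m) :=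
  fun j => match fintype.split j with inl _ => 0 | inr b => y b end.

Definition dsum (n m : nat) (P : set (point n)) (Q : set (point m))
  : set (point (n + m)) :=
  conv ([set x | exists p, P p /\ x = @embl n m p] `|`
        [set x | exists y, Q y /\ x = @embr n m y]).

Definition seg (l : nat) : set (point 1) :=
  [set x | 0 <= x ord0 <= l%:R].

(* Relabel a set in R^(n+1) as a set in R^(n.+1) (identical coordinates). *)
Definition castS (n : nat) (S : set (point (n + 1))) : set (point n.+1) :=
  [set x | S (fun j => x (cast_ord (addn1 n) j))].

Fixpoint Pfam (l : nat -> nat) (i : nat) : set (point i.+1) :=
  match i with
  | 0 => seg (l 0)
  | i'.+1 => @castS i'.+1 (@dsum i'.+1 1 (@Pfam l i') (seg (l i'.+1)))
  end.

(* R(P) = |P cap Z^n| / (q-1)^n for P contained in [0,q-2]^n: the integer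
   points of P are counted among the integer points of the box [0,q-2]^n. *)
Definition Rdens (q n : nat) (P : set (point n)) : R :=
  (#|[set x : {ffun 'I_n -> 'I_(q - 1)} |
        `[< P (fun j => ((x j : nat)%:R : R)) >] ]|)%:R
  / ((q - 1)%:R ^+ n).

End Defs.

Definition prime_power (q : nat) : Prop :=
  exists p k : nat, prime p /\ (0 < k)%N /\ q = (p ^ k)%N.

(* Main.v *)
Require Import Defs.
From mathcomp Require Import all_boot all_order all_algebra.
From mathcomp Require Import all_classical all_reals all_analysis.
From Stdlib Require Import Lia.
From mathcomp Require Import zify.
Import Order.TTheory GRing.Theory Num.Theory.
Import numFieldNormedType.Exports.
Local Open Scope classical_set_scope.
Local Open Scope ring_scope.

Section S.
Variable R : realType.
Variable s : R.

Definition inv n (x : 'I_n -> R) := (forall j, 0 <= x j) /\ \sum_j x j <= s.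
Arguments inv {n}.

Lemma conv_inv n (S : set ('I_n -> R)) x :
  (forall y, S y -> inv y) -> Defs.conv S x -> inv x.
Proof.
move=> HS [m [w [p [w0 [w1 [Sp xe]]]]]]; split.
  move=> j; rewrite xe; apply: sumr_ge0 => k _; apply: mulr_ge0 => //.
  by case: (HS _ (Sp k)).
under eq_bigr do rewrite xe.
rewrite exchange_big /=.
under eq_bigr do rewrite -mulr_sumr.
apply: (le_trans (y := \sum_(k < m) w k * s)).
  apply: ler_sum => k _; apply: ler_wpM2l => //; by case: (HS _ (Sp k)).
by rewrite -mulr_suml w1 mul1r.
Qed.

Lemma embl_inv n m (p : 'I_n -> R) : inv p -> inv (@Defs.embl R n m p).
Proof.
move=> [p0 ps]; split.
  by move=> j; rewrite /embl; case: fintype.split.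
rewrite big_split_ord /=.
under eq_bigr do rewrite /embl -[lshift _ _]/(unsplit (inl _)) unsplitK.
under [X in _ + X]eq_bigr do rewrite /embl -[rshift _ _]/(unsplit (inr _)) unsplitK.
rewrite [X in _ + X]big1 // addr0.
exact: ps.
Qed.

Lemma embr_inv n m (p : 'I_m -> R) : inv p -> inv (@Defs.embr R n m p).
Proof.
move=> [p0 ps]; split.
  by move=> j; rewrite /embr; case: fintype.split.
rewrite big_split_ord /=.
under eq_bigr do rewrite /embr -[lshift _ _]/(unsplit (inl _)) unsplitK.
under [X in _ + X]eq_bigr do rewrite /embr -[rshift _ _]/(unsplit (inr _)) unsplitK.
by rewrite big1 // add0r.
Qed.

Lemma dsum_inv n m P Q x : (forall y, P y -> inv y) -> (forall y, Q y -> inv y) ->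
  @Defs.dsum R n m P Q x -> inv x.
Proof.
move=> HP HQ; apply: conv_inv => y [[p [Pp ->]]|[p [Pp ->]]].
  exact/embl_inv/HP.
exact/embr_inv/HQ.
Qed.

Lemma castS_inv n (S : set ('I_(n + 1) -> R)) x :
  (forall y, S y -> inv y) -> Defs.castS S x -> inv x.
Proof.
move=> HS /HS [h0 hs]; split.
  move=> j; have := h0 (cast_ord (esym (addn1 n)) j).
  by rewrite cast_ordKV.
rewrite (reindex (cast_ord (addn1 n))) //.
exists (cast_ord (esym (addn1 n))) => i _; [exact: cast_ordK | exact: cast_ordKV].
Qed.

Lemma seg_inv l x : (l%:R <= s) -> @Defs.seg R l x -> inv x.
Proof.
move=> ls /andP[x0 xl]; split.
  by move=> j; rewrite (ord1 j).
by rewrite big_ord1; apply: le_trans ls.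
Qed.

Lemma Pfam_inv (l : nat -> nat) : (forall i, (l i)%:R <= s) ->
  forall i x, @Defs.Pfam R l i x -> inv x.
Proof.
move=> hl; elim=> [|i IH] x /=.
  exact: seg_inv.
apply: castS_inv => y; apply: dsum_inv => //.
move=> z; exact: seg_inv.
Qed.
End S.
Lemma geom_bound (R : realType) (t : R) (N : nat) : 0 <= t -> t <= 1 ->
  \sum_(a < N.+1) t ^+ a <= 1 + N%:R * t.
Proof.
move=> t0 t1; elim: N => [|N IH]; first by rewrite big_ord1 expr0 mul0r addr0.
rewrite big_ord_recr /= -natr1 mulrDl mul1r addrA.
apply: lerD => //.
rewrite exprS; apply: ler_piMr => //.
exact: exprn_ile1.
Qed.

Lemma count_bound (R : realType) (N n s0 : nat) (t : R)
  (A : set {ffun 'I_n -> 'I_N}) :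
  0 < t -> t <= 1 -> (forall x, x \in A -> (\sum_j (x j : nat) <= s0)%N) ->
  (#|A|%:R : R) <= (t^-1) ^+ s0 * (\sum_(a < N) t ^+ a) ^+ n.
Proof.
move=> t0 t1 hA.
have -> : (#|A|%:R : R) = \sum_(x in A) 1 by rewrite sumr_const.
rewrite big_mkcond /=.
apply: (le_trans (y := \sum_(x : {ffun 'I_n -> 'I_N}) (t^-1) ^+ s0 * \prod_j t ^+ (x j))).
  apply: ler_sum => x _; case: ifP => xA.
    rewrite -(big_morph (fun k : nat => t ^+ k) (exprD t) (expr0 t)) /=.
    apply: (le_trans (y := t^-1 ^+ s0 * t ^+ s0)).
      by rewrite -exprMn mulVf ?gt_eqF // expr1n.
    apply: ler_wpM2l; first by apply: exprn_ge0; rewrite invr_ge0 ltW.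
    by apply: ler_wiXn2l => //; [exact: ltW | exact: hA].
  by apply: mulr_ge0; [apply: exprn_ge0; rewrite invr_ge0 ltW | apply: prodr_ge0 => j _; apply: exprn_ge0; exact: ltW].
rewrite -mulr_sumr; apply: ler_wpM2l; first by apply: exprn_ge0; rewrite invr_ge0 ltW.
rewrite -(bigA_distr_bigA (fun (j : 'I_n) (a : 'I_N) => t ^+ a)) /=.
by rewrite prodr_const card_ord.
Qed.

Theorem mainTheorem9 (R : realType) (q : nat) (l : nat -> nat)
  (hq : (3 <= q)%N) (hpp : prime_power q)
  (hl : forall i, (l i <= q - 2)%N) :
  (fun i : nat => @Rdens R q i.+1 (@Pfam R l i)) @ \oo --> (0 : R).
Proof.
have q0 : (0 : R) < q%:R by rewrite ltr0n; lia.
set t : R := (q%:R)^-1.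
have t0 : 0 < t by rewrite invr_gt0.
have t1 : t <= 1 by rewrite invr_le1 ?unitfE ?gt_eqF // ler1n; lia.
set c : R := \sum_(a < q - 1) t ^+ a.
have e : (q - 1 = (q - 2).+1)%N by lia.
have cb : c <= 1 + (q - 2)%:R * t by rewrite /c e; exact: geom_bound (ltW t0) t1.
have c0 : 0 <= c by apply: sumr_ge0 => a _; apply: exprn_ge0; exact: ltW.
have ct : (q - 2)%:R * t < 1.
  by rewrite ltr_pdivrMr // mul1r ltr_nat; lia.
have q1 : (0 : R) < (q - 1)%:R by rewrite ltr0n; lia.
have c2 : c < (q - 1)%:R.
  apply: (le_lt_trans cb); apply: (lt_le_trans (y := 1 + 1)); first by rewrite ltrD2l.
  by rewrite -[1 + 1]/(2%:R : R) ler_nat; lia.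
set rho := c / (q - 1)%:R.
have rho0 : 0 <= rho by rewrite divr_ge0 // ltW.
have rho1 : rho < 1 by rewrite ltr_pdivrMr // mul1r.
set K : R := (t^-1) ^+ (q - 2).
have K0 : 0 <= K by apply: exprn_ge0; rewrite invr_ge0 ltW.
apply: (@squeeze_cvgr _ _ _ _ (fun=> 0) (fun i => (K * rho) * rho ^+ i)); last 2 first.
- exact: cvg_cst.
- rewrite -[X in _ --> X](mulr0 (K * rho)); apply: cvgMl_tmp.
  by apply: cvg_expr; rewrite ger0_norm.
apply: nearW => i; apply/andP; split.
  by rewrite /Rdens divr_ge0 // exprn_ge0 // ltW.
rewrite /Rdens -mulrA -exprS /rho expr_div_n mulrA.
apply: ler_wpM2r; first by rewrite invr_ge0 exprn_ge0 // ltW.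
rewrite /K /c; apply: le_trans (@count_bound R (q - 1) i.+1 (q - 2) t _ t0 t1 _) _ => //.
move=> x; rewrite inE /= => /asboolP Hx.
have hl' : forall k, (l k)%:R <= ((q - 2)%:R : R) by move=> k; rewrite ler_nat.
have [_] := @Pfam_inv R (q - 2)%:R l hl' i _ Hx.
by rewrite -natr_sum ler_nat.
Qed.
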